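(* For every semisimple MV-algebra $M$ and every compact Hausdorff space $Y$, the convex set $\mathcal{P}(M,C(Y))$ has an extreme point.
   Context: For an MV-algebra $(M,\oplus,\neg,0)$: $1\coloneqq\neg 0$, $a\vee b\coloneqq\neg(\neg a\oplus b)\oplus b$, $a\wedge b\coloneqq\neg(\neg a\vee\neg b)$. A probability map is a function $p\colon M\to N$ between MV-algebras such that for all $a,b\in M$: (P1) $p(a\oplus b)=p(a)\oplus p(b\wedge\neg a)$; (P2) $p(\neg a)=\neg p(a)$; (P3) $p(1)=1$. $C(Y)$ is the MV-algebra of continuous functions $Y\to[0,1]$ with pointwise operations $\min(a+b,1)$, $1-a$. $\mathcal{P}(M,C(Y))$ is the set of probability maps $M\to C(Y)$, a convex subset of the real linear space of maps $M\to C_{\mathbb{R}}(Y)$. $M$ is semisimple if the intersection of its maximal ideals is $\{0\}$. *)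

(* Defs.v *)
From HB Require Import structures.
From mathcomp Require Import all_boot all_order all_algebra.
From mathcomp Require Import all_classical all_reals all_analysis.
Set Implicit Arguments. Unset Strict Implicit. Unset Printing Implicit Defensive.
Import Order.TTheory GRing.Theory Num.Theory numFieldNormedType.Exports.
Local Open Scope ring_scope.

Record MVAlgebra := MkMV {
  mv_car :> Type;
  mv_oplus : mv_car -> mv_car -> mv_car;
  mv_neg : mv_car -> mv_car;
  mv_zero : mv_car;
  mv_oplusA : forall x y z, mv_oplus x (mv_oplus y z) = mv_oplus (mv_oplus x y) z;
  mv_oplusC : forall x y, mv_oplus x y = mv_oplus y x;
  mv_oplus0 : forall x, mv_oplus x mv_zero = x;
  mv_negK : forall x, mv_neg (mv_neg x) = x;
  mv_oplus1 : forall x, mv_oplus x (mv_neg mv_zero) = mv_neg mv_zero;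
  mv_luk : forall x y, mv_oplus (mv_neg (mv_oplus (mv_neg x) y)) y
                     = mv_oplus (mv_neg (mv_oplus (mv_neg y) x)) x
}.

Arguments mv_oplus {m}.
Arguments mv_neg {m}.

Section MVDefs.
Variable M : MVAlgebra.
Definition mv_one : M := mv_neg (mv_zero M).
Definition mv_join (a b : M) : M := mv_oplus (mv_neg (mv_oplus (mv_neg a) b)) b.
Definition mv_meet (a b : M) : M := mv_neg (mv_join (mv_neg a) (mv_neg b)).
Definition mv_le (a b : M) : Prop := mv_oplus (mv_neg a) b = mv_one.

Definition mv_ideal (I : M -> Prop) : Prop :=
  [/\ I (mv_zero M),
      (forall a b, mv_le a b -> I b -> I a) &
      (forall a b, I a -> I b -> I (mv_oplus a b))].

Definition mv_proper (I : M -> Prop) : Prop := exists x, ~ I x.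

Definition mv_maximal_ideal (I : M -> Prop) : Prop :=
  [/\ mv_ideal I, mv_proper I &
      forall J : M -> Prop, mv_ideal J -> mv_proper J ->
        (forall x, I x -> J x) -> forall x, J x -> I x].

Definition mv_semisimple : Prop :=
  forall x : M, (forall I, mv_maximal_ideal I -> I x) -> x = mv_zero M.
End MVDefs.

(* Probability maps M -> C(Y), C(Y) = continuous functions Y -> [0,1]
   with pointwise operations a (+) b = min(a+b,1), ~a = 1 - a. *)
Definition prob_map (M : MVAlgebra) (R : realType) (Y : topologicalType)
    (p : M -> Y -> R) : Prop :=
  [/\ (forall a, continuous (p a)),
      (forall a y, 0 <= p a y <= 1),
      (forall a b y, p (mv_oplus a b) y
           = Num.min (p a y + p (mv_meet b (mv_neg a)) y) 1),
      (forall a y, p (mv_neg a) y = 1 - p a y) &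
      (forall y, p (mv_one M) y = 1)].

Definition extreme_prob_map (M : MVAlgebra) (R : realType) (Y : topologicalType)
    (p : M -> Y -> R) : Prop :=
  prob_map p /\
  forall (p1 p2 : M -> Y -> R) (t : R), prob_map p1 -> prob_map p2 ->
    0 < t < 1 -> (forall a y, p a y = t * p1 a y + (1 - t) * p2 a y) ->
    p1 = p2.

(* Main.v *)
Require Import Defs.
From mathcomp Require Import all_boot all_order all_algebra.
From mathcomp Require Import all_classical all_reals all_analysis.
From mathcomp Require Import zify ring lra.
From Stdlib Require Import Classical.
Set Implicit Arguments. Unset Strict Implicit. Unset Printing Implicit Defensive.
Import Order.TTheory GRing.Theory Num.Theory numFieldNormedType.Exports.

(* Proof outline: semisimplicity + nontriviality give a maximal ideal I; the
   quotient preorder modulo I is total and archimedean; counting functions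
   N_e(x) = min{n | x <= n.e mod I} give approximate states, whose ultrafilter
   limit is a state h vanishing on I (exact state in the atomic case).  Any
   state vanishing on I equals h; this yields extremality. *)

Section MVBasic.
Variable M : MVAlgebra.
Local Notation "x ⊕ y" := (@mv_oplus M x y) (at level 50, left associativity).
Local Notation "¬ x" := (@mv_neg M x) (at level 35, right associativity).
Local Notation z0 := (mv_zero M).
Local Notation one := (mv_one M).
Definition msub (x y : M) : M := ¬ (¬ x ⊕ y).
Local Notation "x ⊖ y" := (msub x y) (at level 50, left associativity).
Local Notation le := (@mv_le M).
Implicit Types (x y z a b c d e u v w A B : M).

Lemma m_addA x y z : x ⊕ (y ⊕ z) = x ⊕ y ⊕ z. Proof. exact: mv_oplusA. Qed.
Lemma m_addC x y : x ⊕ y = y ⊕ x. Proof. exact: mv_oplusC. Qed.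
Lemma m_addCA x y z : x ⊕ (y ⊕ z) = y ⊕ (x ⊕ z).
Proof. by rewrite !m_addA (m_addC x). Qed.
Lemma m_addAC x y z : x ⊕ y ⊕ z = x ⊕ z ⊕ y.
Proof. by rewrite -!m_addA (m_addC y). Qed.
Lemma m_add0 x : x ⊕ z0 = x. Proof. exact: mv_oplus0. Qed.
Lemma m_add0l x : z0 ⊕ x = x. Proof. by rewrite m_addC m_add0. Qed.
Lemma m_negK x : ¬ ¬ x = x. Proof. exact: mv_negK. Qed.
Lemma m_add1 x : x ⊕ one = one. Proof. exact: mv_oplus1. Qed.
Lemma m_add1l x : one ⊕ x = one. Proof. by rewrite m_addC m_add1. Qed.
Lemma m_luk x y : ¬ (¬ x ⊕ y) ⊕ y = ¬ (¬ y ⊕ x) ⊕ x. Proof. exact: mv_luk. Qed.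
Lemma m_neg1 : ¬ one = z0. Proof. by rewrite /mv_one m_negK. Qed.
Lemma m_neg0 : ¬ z0 = one. Proof. by []. Qed.
Lemma m_addNx x : ¬ x ⊕ x = one.
Proof. have := m_luk x one. by rewrite m_neg1 m_add0l m_add1 => <-. Qed.
Lemma m_addxN x : x ⊕ ¬ x = one. Proof. by rewrite m_addC m_addNx. Qed.
Lemma m_neg_inj x y : ¬ x = ¬ y -> x = y.
Proof. by move=> h; rewrite -(m_negK x) h m_negK. Qed.

Lemma m_msubE x y : x ⊖ y = ¬ (¬ x ⊕ y). Proof. by []. Qed.
Lemma m_negsub x y : ¬ (x ⊖ y) = ¬ x ⊕ y. Proof. by rewrite /msub m_negK. Qed.
Lemma m_joinE x y : mv_join x y = x ⊖ y ⊕ y. Proof. by []. Qed.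
Lemma m_joinC x y : mv_join x y = mv_join y x. Proof. exact: m_luk. Qed.

Lemma m_leE x y : le x y <-> ¬ x ⊕ y = one. Proof. by []. Qed.
Lemma m_le_sub0 x y : le x y -> x ⊖ y = z0.
Proof. by move=> h; rewrite /msub h m_neg1. Qed.
Lemma m_sub0_le x y : x ⊖ y = z0 -> le x y.
Proof. by move=> h; rewrite /mv_le -(m_negK (¬ x ⊕ y)) -/(msub x y) h. Qed.

Lemma m_join_eq x y : le x y -> mv_join x y = y.
Proof. by move=> h; rewrite m_joinE m_le_sub0 // m_add0l. Qed.
Lemma m_join_eq' x y : le x y -> mv_join y x = y.
Proof. by move=> h; rewrite m_joinC m_join_eq. Qed.

Lemma m_le_refl x : le x x. Proof. exact: m_addNx. Qed.
Lemma m_le_add x z : le x (x ⊕ z). Proof. by rewrite /mv_le m_addA m_addNx m_add1l. Qed.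
Lemma m_le_addl x z : le x (z ⊕ x). Proof. by rewrite m_addC; exact: m_le_add. Qed.
Lemma m_leP x y : le x y <-> exists z, y = x ⊕ z.
Proof.
split; last by move=> [z ->]; exact: m_le_add.
move=> h; exists (y ⊖ x); by rewrite m_addC -m_joinE m_joinC m_join_eq.
Qed.
Lemma m_le_trans x y z : le x y -> le y z -> le x z.
Proof. move=> /m_leP[a ->] /m_leP[b ->]; rewrite -m_addA; exact: m_le_add. Qed.
Lemma m_le_anti x y : le x y -> le y x -> x = y.
Proof. by move=> h1 h2; rewrite -(m_join_eq h1) m_joinC (m_join_eq h2). Qed.
Lemma m_le0x x : le z0 x. Proof. by rewrite /mv_le m_neg0 m_add1l. Qed.
Lemma m_lex1 x : le x one. Proof. by rewrite /mv_le m_add1. Qed.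
Lemma m_le0 x : le x z0 -> x = z0. Proof. by move=> h; apply: m_le_anti h (m_le0x _). Qed.
Lemma m_le1 x : le one x -> x = one. Proof. by move=> h; apply: m_le_anti (m_lex1 _) h. Qed.
Lemma m_le_add2r x y z : le x y -> le (x ⊕ z) (y ⊕ z).
Proof. move=> /m_leP[a ->]; apply/m_leP; exists a; by rewrite m_addAC. Qed.
Lemma m_le_add2l x y z : le x y -> le (z ⊕ x) (z ⊕ y).
Proof. by move=> h; rewrite !(m_addC z); apply: m_le_add2r. Qed.
Lemma m_le_add2 x y z w : le x y -> le z w -> le (x ⊕ z) (y ⊕ w).
Proof. move=> h1 h2; apply: m_le_trans (m_le_add2r _ h1) (m_le_add2l _ h2). Qed.
Lemma m_le_neg x y : le x y -> le (¬ y) (¬ x).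
Proof. by rewrite /mv_le m_negK m_addC. Qed.
Lemma m_resid a b c : le (a ⊖ b) c <-> le a (b ⊕ c).
Proof. by rewrite /mv_le m_negsub m_addA. Qed.
Lemma m_le_sub_add a b : le a (b ⊕ (a ⊖ b)).
Proof. by apply/m_resid; exact: m_le_refl. Qed.
Lemma m_le_sub a b : le (a ⊖ b) a.
Proof. by apply/m_resid; exact: m_le_addl. Qed.
Lemma m_sub_add_join a b : b ⊕ (a ⊖ b) = mv_join a b.
Proof. by rewrite m_addC. Qed.
Lemma m_le_joinl a b : le a (mv_join a b).
Proof. by rewrite m_joinC m_joinE; exact: m_le_addl. Qed.
Lemma m_le_joinr a b : le b (mv_join a b).
Proof. by rewrite m_joinE; exact: m_le_addl. Qed.
Lemma m_join_le a b c : le a c -> le b c -> le (mv_join a b) c.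
Proof.
move=> hac hbc.
have hc : c = b ⊕ (c ⊖ b) by rewrite m_sub_add_join m_join_eq'.
have hu : le b (¬ a ⊕ b) by exact: m_le_addl.
rewrite /mv_le hc m_joinE.
have -> : ¬ (a ⊖ b ⊕ b) = (¬ a ⊕ b) ⊖ b by [].
rewrite m_addA -m_joinE m_join_eq' // -m_addA m_sub_add_join m_join_eq' //.
Qed.
Lemma m_meetE a b : mv_meet a b = ¬ mv_join (¬ a) (¬ b). Proof. by []. Qed.
Lemma m_meetC a b : mv_meet a b = mv_meet b a. Proof. by rewrite !m_meetE m_joinC. Qed.
Lemma m_le_meetl a b : le (mv_meet a b) a.
Proof. by rewrite m_meetE -{2}(m_negK a); apply: m_le_neg; exact: m_le_joinl. Qed.
Lemma m_le_meetr a b : le (mv_meet a b) b.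
Proof. by rewrite m_meetC; exact: m_le_meetl. Qed.
Lemma m_meet_le w a b : le w a -> le w b -> le w (mv_meet a b).
Proof.
move=> h1 h2; rewrite m_meetE -(m_negK w); apply: m_le_neg.
by apply: m_join_le; apply: m_le_neg.
Qed.
Lemma m_meet_sub x y : mv_meet x y = x ⊖ (x ⊖ y).
Proof.
rewrite m_meetE m_joinC m_joinE /msub !m_negK; congr (¬ _).
by rewrite m_addC (m_addC y).
Qed.
Lemma m_decomp x y : x = mv_meet x y ⊕ (x ⊖ y).
Proof. by rewrite m_meet_sub -m_joinE m_join_eq' //; exact: m_le_sub. Qed.
Lemma m_sub_add_meet B e : (B ⊕ e) ⊖ B = mv_meet (¬ B) e.
Proof. by rewrite m_meet_sub /msub !m_negK m_addC. Qed.
Lemma m_add_meetN a b : a ⊕ b = a ⊕ mv_meet b (¬ a).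
Proof. by rewrite m_meetC -m_sub_add_meet m_sub_add_join m_join_eq' //; exact: m_le_add. Qed.
Lemma m_sub_add2r a b c : le ((a ⊕ c) ⊖ (b ⊕ c)) (a ⊖ b).
Proof. apply/m_resid; rewrite m_addAC; apply: m_le_add2r; exact: m_le_sub_add. Qed.
Lemma m_le_sub_eq0 v w : le v w -> v ⊖ w = z0.
Proof. exact: m_le_sub0. Qed.
Lemma m_prelin x y : mv_meet (x ⊖ y) (y ⊖ x) = z0.
Proof.
set u := x ⊖ y; set v := y ⊖ x; set m := mv_meet x y.
have hx : x = m ⊕ u by exact: m_decomp.
have hy : y = m ⊕ v by rewrite /m m_meetC; exact: m_decomp.
have hv : le v (v ⊖ u).
  have e : v = (m ⊕ v) ⊖ (m ⊕ u) by rewrite -hy -hx.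
  rewrite {1}e !(m_addC m); exact: m_sub_add2r.
by rewrite m_meetC m_meet_sub (m_le_sub0 hv).
Qed.
Lemma m_distr_le a b c : le (mv_meet (a ⊕ b) (a ⊕ c)) (a ⊕ mv_meet b c).
Proof.
apply/(@m_resid _ a); apply: m_meet_le; apply/m_resid.
  exact: m_le_meetl. exact: m_le_meetr.
Qed.
Lemma m_meet_add_le b c d : le (mv_meet b (c ⊕ d)) (mv_meet b c ⊕ mv_meet b d).
Proof.
set a := mv_meet b d.
have h1 := m_distr_le a b c; rewrite (m_addC a b) (m_addC a c) (m_addC a) in h1.
apply: m_le_trans _ h1; apply: m_meet_le.
  exact: m_le_trans (m_le_meetl _ _) (m_le_add _ _).
have h2 := m_distr_le c b d; rewrite -/a in h2.
apply: m_le_trans _ h2; apply: m_meet_le; last exact: m_le_meetr.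
exact: m_le_trans (m_le_meetl _ _) (m_le_addl _ _).
Qed.
Lemma m_meet0 b c d : mv_meet b c = z0 -> mv_meet b d = z0 -> mv_meet b (c ⊕ d) = z0.
Proof. move=> h1 h2; apply: m_le0; by rewrite -(m_add0 z0) -{1}h1 -{1}h2; exact: m_meet_add_le. Qed.

Fixpoint nm (n : nat) (x : M) : M := if n is n'.+1 then nm n' x ⊕ x else z0.
Lemma m_nm0 x : nm 0 x = z0. Proof. by []. Qed.
Lemma m_nmS n x : nm n.+1 x = nm n x ⊕ x. Proof. by []. Qed.
Lemma m_nmD m n x : nm (m + n) x = nm m x ⊕ nm n x.
Proof. elim: n => [|n IH]; first by rewrite addn0 m_add0. by rewrite addnS /= IH m_addA. Qed.
Lemma m_nm_le m n x : (m <= n)%N -> le (nm m x) (nm n x).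
Proof. move=> /subnKC <-; rewrite m_nmD; exact: m_le_add. Qed.
Lemma m_nmM m n x : nm (m * n) x = nm m (nm n x).
Proof. elim: m => [|m IH] //=; by rewrite mulSn m_nmD IH m_addC. Qed.
Lemma m_meet_nm b c n : mv_meet b c = z0 -> mv_meet b (nm n c) = z0.
Proof.
move=> h; elim: n => [|n IH] /=; first by apply: m_le0; exact: m_le_meetr.
exact: m_meet0.
Qed.
Lemma m_meet_nm2 a b n : mv_meet a b = z0 -> mv_meet (nm n a) (nm n b) = z0.
Proof. move=> h; apply: m_meet_nm; rewrite m_meetC; apply: m_meet_nm; by rewrite m_meetC. Qed.
End MVBasic.


Definition prec (M : MVAlgebra) (I : M -> Prop) (x y : M) := I (msub x y).

Section Ideal.
Variable M : MVAlgebra.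
Local Notation "x ⊕ y" := (@mv_oplus M x y) (at level 50, left associativity).
Local Notation "¬ x" := (@mv_neg M x) (at level 35, right associativity).
Local Notation z0 := (mv_zero M).
Local Notation one := (mv_one M).
Local Notation "x ⊖ y" := (msub x y) (at level 50, left associativity).
Local Notation le := (@mv_le M).
Implicit Types (x y z a b c d e u v w A B : M).
Variable I : M -> Prop.
Hypothesis hmax : mv_maximal_ideal I.
Local Notation "x ≼ y" := (prec I x y) (at level 70).

Lemma I0 : I z0. Proof. by case: hmax => [[]]. Qed.
Lemma Idown a b : le a b -> I b -> I a. Proof. by case: hmax => [[_ h _] _ _]; exact: h. Qed.
Lemma Iadd a b : I a -> I b -> I (a ⊕ b). Proof. by case: hmax => [[_ _ h] _ _]; exact: h. Qed.
Lemma notI1 : ~ I one.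
Proof. case: hmax => _ [x nx] _ h; apply: nx; exact: Idown (m_lex1 _) h. Qed.

Lemma le_prec x y : le x y -> x ≼ y.
Proof. by move=> h; rewrite /prec (m_le_sub0 h); exact: I0. Qed.
Lemma prec_refl x : x ≼ x.
Proof. exact: le_prec (m_le_refl x). Qed.
Lemma prec_trans x y z : x ≼ y -> y ≼ z -> x ≼ z.
Proof.
move=> h1 h2; apply: Idown (Iadd h1 h2); apply/m_resid.
apply: m_le_trans (m_le_sub_add x y) _.
have -> : z ⊕ ((x ⊖ y) ⊕ (y ⊖ z)) = z ⊕ (y ⊖ z) ⊕ (x ⊖ y) by rewrite m_addA m_addAC.
exact: m_le_add2r (m_le_sub_add y z).
Qed.
Lemma prec_add2r x y z : x ≼ y -> x ⊕ z ≼ y ⊕ z.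
Proof. by move=> h; apply: Idown h; exact: m_sub_add2r. Qed.
Lemma prec_add x y z w : x ≼ y -> z ≼ w -> x ⊕ z ≼ y ⊕ w.
Proof.
move=> h1 h2; apply: prec_trans (prec_add2r z h1) _.
by rewrite !(m_addC y); apply: prec_add2r.
Qed.
Lemma prec_neg x y : x ≼ y -> ¬ y ≼ ¬ x.
Proof. by rewrite /prec /msub m_negK m_addC. Qed.
Lemma I_prec0 x : I x <-> x ≼ z0.
Proof. by rewrite /prec /msub m_add0 m_negK. Qed.
Lemma I_prec x y : I x -> x ≼ y.
Proof. move=> h; apply: Idown h; exact: m_le_sub. Qed.
Lemma prec1 x : one ≼ x <-> I (¬ x).
Proof. by rewrite /prec /msub m_neg1 m_add0l. Qed.
Lemma prec_x1 x : x ≼ one. Proof. apply: le_prec; exact: m_lex1. Qed.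
Lemma prec_nm n a b : a ≼ b -> nm n a ≼ nm n b.
Proof. move=> h; elim: n => [|n IH] /=; [exact: prec_refl | exact: prec_add]. Qed.
Lemma join_prec c x : c ≼ x -> mv_join x c ≼ x.
Proof.
move=> h; apply: Idown h; apply/m_resid; rewrite m_addC m_joinC; exact: m_le_refl.
Qed.
Lemma prec_join x c : x ≼ mv_join x c.
Proof. apply: le_prec; exact: m_le_joinl. Qed.

Lemma arch a : ~ I a -> exists n, I (¬ nm n a).
Proof.
move=> na.
pose J z := exists i n, I i /\ le z (i ⊕ nm n a).
have Jid : mv_ideal J.
  split.
  - exists z0, 0; split; [exact: I0 | exact: m_le0x].
  - move=> x y hxy [i [n [Ii hy]]]; exists i, n; split => //; exact: m_le_trans hxy hy.
  - move=> x y [i [n [Ii hx]]] [j [m [Ij hy]]]; exists (i ⊕ j), (n + m); split.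
      exact: Iadd.
    apply: m_le_trans (m_le_add2 hx hy) _; rewrite m_nmD.
    have -> : i ⊕ nm n a ⊕ (j ⊕ nm m a) = i ⊕ j ⊕ (nm n a ⊕ nm m a).
      by rewrite -!m_addA (m_addCA (nm n a)).
    exact: m_le_refl.
have IJ : forall x, I x -> J x.
  move=> x Ix; exists x, 0; split => //=; rewrite m_add0; exact: m_le_refl.
have Ja : J a by exists z0, 1; split; [exact: I0 | rewrite /= m_add0l m_add0l; exact: m_le_refl].
have nJp : ~ mv_proper J.
  move=> Jp; case: hmax => _ _ H; exact: na (H J Jid Jp IJ a Ja).
have J1 : J one by apply: NNPP => n1; apply: nJp; exists one.
case: J1 => i [n [Ii h1]]; exists n; apply: Idown Ii.
by rewrite /mv_le m_negK m_addC; apply: m_le1.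
Qed.

Lemma total x y : x ≼ y \/ y ≼ x.
Proof.
apply: NNPP => /not_or_and [nu nv].
have [n1 h1] := arch nu; have [n2 h2] := arch nv.
set u := x ⊖ y in nu h1; set v := y ⊖ x in nv h2.
have e1 : I (¬ nm (n1 + n2) u).
  apply: Idown h1; apply: m_le_neg; apply: m_nm_le; exact: leq_addr.
have e2 : I (¬ nm (n1 + n2) v).
  apply: Idown h2; apply: m_le_neg; apply: m_nm_le; exact: leq_addl.
have hm : mv_meet (nm (n1 + n2) u) (nm (n1 + n2) v) = z0 by apply: m_meet_nm2; exact: m_prelin.
apply: notI1; apply: Idown (Iadd e1 e2).
have -> : one = mv_join (¬ nm (n1 + n2) u) (¬ nm (n1 + n2) v).
  by rewrite -(m_negK (mv_join _ _)) -m_meetE hm.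
rewrite m_joinE; apply: m_le_add2r; exact: m_le_sub.
Qed.

Lemma CL B e : B ⊕ e ≼ B -> ~ one ≼ B -> I e.
Proof.
move=> h nB; rewrite /prec m_sub_add_meet in h.
case: (total e (¬ B)) => h2.
  rewrite (m_decomp e (¬ B)); apply: Iadd => //; by rewrite m_meetC.
exfalso; apply: nB; apply/prec1; rewrite (m_decomp (¬ B) e); exact: Iadd.
Qed.

Lemma strict j k e : nm j e ≼ nm k e -> ~ one ≼ nm k e -> ~ I e -> (j <= k)%N.
Proof.
move=> h nk ne; rewrite leqNgt; apply/negP => hkj; apply: ne.
apply: (CL _ nk); rewrite -m_nmS; apply: prec_trans h; apply: le_prec; exact: m_nm_le.
Qed.

Lemma NS A B e : B ⊕ e ≼ ¬ A -> ~ one ≼ B -> ~ I e -> ~ one ≼ A ⊕ B.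
Proof.
move=> h nB ne /prec1 hAB; apply: ne; apply: (CL _ nB); apply: prec_trans h _.
by rewrite /prec /msub m_negK.
Qed.
End Ideal.


Definition Nf (M : MVAlgebra) (I : M -> Prop) (e x : M) : nat :=
  if pselect (exists n, `[< prec I x (nm n e) >]) is left h then ex_minn h else 0.

Section Count.
Variable M : MVAlgebra.
Local Notation "x ⊕ y" := (@mv_oplus M x y) (at level 50, left associativity).
Local Notation "¬ x" := (@mv_neg M x) (at level 35, right associativity).
Local Notation z0 := (mv_zero M).
Local Notation one := (mv_one M).
Local Notation "x ⊖ y" := (msub x y) (at level 50, left associativity).
Local Notation le := (@mv_le M).
Implicit Types (x y z a b c d e f g u v w A B : M).
Variable I : M -> Prop.
Hypothesis hmax : mv_maximal_ideal I.
Local Notation "x ≼ y" := (prec I x y) (at level 70).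
Local Notation N := (Nf I).
Local Notation ptrans := (@prec_trans M I hmax).

Section Fixe.
Variable e : M.
Hypothesis ne : ~ I e.
Local Notation b := (N e one).

Lemma N_ex x : exists n, x ≼ nm n e.
Proof.
have [n hn] := arch hmax ne; exists n.
apply: (ptrans (prec_x1 hmax x)); exact/prec1.
Qed.
Lemma N_spec x : x ≼ nm (N e x) e /\ forall n, x ≼ nm n e -> (N e x <= n)%N.
Proof.
rewrite /Nf; case: pselect => [h|nh].
  case: ex_minnP => m /asboolP hm hmin; split => // n hn; apply: hmin; exact/asboolP.
exfalso; apply: nh; have [n hn] := N_ex x; exists n; exact/asboolP.
Qed.
Lemma Nspec x : x ≼ nm (N e x) e. Proof. by case: (N_spec x). Qed.
Lemma Nle x n : x ≼ nm n e -> (N e x <= n)%N. Proof. by case: (N_spec x) => _; apply. Qed.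
Lemma Nlt x n : (n < N e x)%N -> nm n e ≼ x.
Proof.
move=> h; case: (total hmax x (nm n e)) => // h2.
by have := Nle h2; rewrite leqNgt h.
Qed.
Lemma N_mono x y : x ≼ y -> (N e x <= N e y)%N.
Proof. move=> h; apply: Nle. exact: (ptrans h (Nspec y)). Qed.
Lemma N_le_b x : (N e x <= b)%N.
Proof. apply: N_mono; exact: (prec_x1 hmax). Qed.
Lemma N_I x : I x -> N e x = 0.
Proof. move=> h; apply/eqP; rewrite -leqn0; apply: Nle; exact: (I_prec hmax). Qed.
Lemma sat k : (k < b)%N -> ~ one ≼ nm k e.
Proof. by move=> h h2; have := Nle h2; rewrite leqNgt h. Qed.
Lemma unsat k : ~ one ≼ nm k e -> (k < b)%N.
Proof.
move=> h; rewrite ltnNge; apply/negP => hb; apply: h.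
apply: ptrans (Nspec one) _; apply: (le_prec hmax); exact: m_nm_le.
Qed.
Lemma b_pos : (0 < b)%N.
Proof.
rewrite lt0n; apply/negP => /eqP h; have := Nspec one; rewrite h /=.
move=> h0; apply: (notI1 hmax); exact/I_prec0.
Qed.

Lemma A1 x z : (N e (x ⊕ z) <= N e x + N e z)%N.
Proof. apply: Nle; rewrite m_nmD; apply: (prec_add hmax) => //; exact: Nspec. Qed.
Lemma A2 x z : (N e (x ⊕ z) < b)%N -> (N e x + N e z <= N e (x ⊕ z) + 2)%N.
Proof.
move=> hk.
have hx : (N e x <= N e (x ⊕ z))%N by apply: N_mono; apply: (le_prec hmax); exact: m_le_add.
have hz : (N e z <= N e (x ⊕ z))%N by apply: N_mono; apply: (le_prec hmax); exact: m_le_addl.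
case hn: (N e x) => [|n]; first by rewrite add0n; apply: leq_trans hz (leq_addr _ _).
case hm: (N e z) => [|m]; first by rewrite addn0 -hn; apply: leq_trans hx (leq_addr _ _).
have h1 : nm n e ≼ x by apply: Nlt; rewrite hn.
have h2 : nm m e ≼ z by apply: Nlt; rewrite hm.
have hnm : nm (n + m) e ≼ x ⊕ z by rewrite m_nmD; exact: (prec_add hmax).
have := strict hmax (ptrans hnm (Nspec _)) (sat hk) ne; lia.
Qed.
Lemma A3a x : (b <= N e x + N e (¬ x))%N.
Proof.
apply: Nle; rewrite -(m_addxN x) m_nmD; apply: (prec_add hmax) => //; exact: Nspec.
Qed.
Lemma A3b x : (N e x + N e (¬ x) <= b + 2)%N.
Proof.
have hb1 := N_le_b (¬ x); have hb2 := N_le_b x.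
case hn: (N e x) => [|[|n]].
- lia.
- lia.
case hm: (N e (¬ x)) => [|m].
  lia.
have h1 : nm n.+1 e ≼ x by apply: Nlt; rewrite hn.
have h2 : nm m e ≼ ¬ x by apply: Nlt; rewrite hm.
have h3 : nm n e ⊕ e ≼ ¬ nm m e.
  apply: ptrans h1 _; rewrite -{1}(m_negK x); exact: prec_neg.
have hB : ~ one ≼ nm n e by apply: sat; lia.
have h4 := NS hmax h3 hB ne; rewrite -m_nmD in h4; have := unsat h4.
lia.
Qed.

Hypothesis atom : forall f, ~ I f -> e ≼ f.
Lemma tight x : nm (N e x) e ≼ x.
Proof.
case hn: (N e x) => [|n]; first by apply: (le_prec hmax); exact: m_le0x.
have h1 : nm n e ≼ x by apply: Nlt; rewrite hn.
have h2 : ~ I (x ⊖ nm n e).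
  move=> h; have := Nle h; by rewrite hn ltnn.
rewrite m_nmS; apply: ptrans (prec_add hmax (prec_refl hmax _) (atom h2)) _.
rewrite m_sub_add_join; exact: (join_prec hmax).
Qed.
Lemma E2 x z : (N e (x ⊕ z) < b)%N -> (N e x + N e z <= N e (x ⊕ z))%N.
Proof.
move=> hk.
have h : nm (N e x + N e z) e ≼ x ⊕ z by rewrite m_nmD; apply: (prec_add hmax); exact: tight.
exact: (strict hmax (ptrans h (Nspec _)) (sat hk) ne).
Qed.
Lemma E3 x : (N e x + N e (¬ x) <= b)%N.
Proof.
case hn: (N e x) => [|n]; first by rewrite add0n; exact: N_le_b.
have h1 : nm n.+1 e ≼ x by rewrite -hn; exact: tight.
have h2 := tight (¬ x).
have h3 : nm n e ⊕ e ≼ ¬ nm (N e (¬ x)) e.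
  apply: ptrans h1 _; rewrite -{1}(m_negK x); exact: prec_neg.
have hB : ~ one ≼ nm n e by apply: sat; rewrite -hn; exact: N_le_b.
have h4 := NS hmax h3 hB ne; rewrite -m_nmD in h4; have := unsat h4.
lia.
Qed.
End Fixe.

Lemma half e : ~ I e -> (exists f, ~ I f /\ ~ e ≼ f) ->
  exists d, [/\ ~ I d, nm 2 d ≼ e & ~ one ≼ d].
Proof.
move=> ne [f [nf hef]].
have hfe : f ≼ e by case: (total hmax e f).
have ng : ~ I (e ⊖ f) by [].
have hj : f ⊕ (e ⊖ f) ≼ e by rewrite m_sub_add_join; exact: (join_prec hmax).
have n1f : ~ one ≼ f by move=> h; apply: hef; exact: (ptrans (prec_x1 hmax e) h).
case: (total hmax f (e ⊖ f)) => hd.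
  exists f; split => //; rewrite /= m_add0l; apply: ptrans hj.
  exact: (prec_add hmax (prec_refl hmax _) hd).
exists (e ⊖ f); split => //.
  rewrite /= m_add0l; apply: ptrans hj.
  exact: (prec_add hmax hd (prec_refl hmax _)).
by move=> h; apply: n1f; exact: (ptrans h hd).
Qed.

Lemma grow e d : ~ I e -> ~ I d -> nm 2 d ≼ e -> ~ one ≼ d ->
  (N e one < N d one)%N.
Proof.
move=> ne nd hde n1d; set c := N d one.
have hc2 : (2 <= c)%N.
  rewrite ltnNge; apply/negP => hc; apply: n1d.
  apply: ptrans (Nspec nd one) _; apply: (le_prec hmax).
  apply: m_le_trans (m_nm_le _ hc) _; rewrite /= m_add0l; exact: m_le_refl.
have hc0 : c = odd c + c./2 * 2 by rewrite muln2 odd_double_half.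
have hc1 : uphalf c = odd c + c./2 by rewrite uphalf_half.
have hu : (c <= (uphalf c) * 2)%N by rewrite hc1 {1}hc0; case: (odd c) => /=; lia.
have h : one ≼ nm (uphalf c) e.
  apply: ptrans (Nspec nd one) _; apply: ptrans (le_prec hmax (m_nm_le _ hu)) _.
  rewrite m_nmM; exact: (prec_nm hmax).
have := Nle ne h; move: hc2 hc0 hc1; case: (odd c) => /=; lia.
Qed.

Lemma big_b : ~ (exists a, ~ I a /\ forall f, ~ I f -> a ≼ f) ->
  forall K, exists e, ~ I e /\ (K <= N e one)%N.
Proof.
move=> na; elim=> [|K [e [ne hK]]]; first by exists one; split => //; exact: notI1.
have : exists f, ~ I f /\ ~ e ≼ f.
  apply: NNPP => h; apply: na; exists e; split => // f nf; apply: NNPP => hf.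
  apply: h; by exists f.
case/(half ne) => d [nd hd n1d]; exists d; split => //.
exact: (leq_ltn_trans hK (grow ne nd hd n1d)).
Qed.
End Count.

Local Open Scope ring_scope.

Definition is_state (M : MVAlgebra) (R : realFieldType) (s : M -> R) : Prop :=
  [/\ (forall a, 0 <= s a <= 1),
      (forall a b, s (mv_oplus a b) = Num.min (s a + s (mv_meet b (mv_neg a))) 1),
      (forall a, s (mv_neg a) = 1 - s a) &
      s (mv_one M) = 1].

Section States.
Variable M : MVAlgebra.
Variable R : realFieldType.
Local Notation "x ⊕ y" := (@mv_oplus M x y) (at level 50, left associativity).
Local Notation "¬ x" := (@mv_neg M x) (at level 35, right associativity).
Local Notation z0 := (mv_zero M).
Local Notation one := (mv_one M).
Local Notation "x ⊖ y" := (msub x y) (at level 50, left associativity).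
Local Notation le := (@mv_le M).
Implicit Types (x y z a b c d e f g u v w A B : M).
Variable I : M -> Prop.
Hypothesis hmax : mv_maximal_ideal I.
Local Notation "x ≼ y" := (prec I x y) (at level 70).
Local Notation N := (Nf I).
Local Notation ptrans := (@prec_trans M I hmax).

Variable s : M -> R.
Hypothesis hs : is_state s.
Hypothesis svan : forall x, I x -> s x = 0.

Lemma s01 x : 0 <= s x <= 1. Proof. by case: hs. Qed.
Lemma s0 x : 0 <= s x. Proof. by case/andP: (s01 x). Qed.
Lemma s1 x : s x <= 1. Proof. by case/andP: (s01 x). Qed.
Lemma sadd a c : s (a ⊕ c) = Num.min (s a + s (mv_meet c (¬ a))) 1.
Proof. by case: hs. Qed.
Lemma sneg a : s (¬ a) = 1 - s a. Proof. by case: hs. Qed.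
Lemma sone : s one = 1. Proof. by case: hs. Qed.

Lemma s_mono a c : le a c -> s a <= s c.
Proof.
move=> /m_leP [z ->]; rewrite sadd le_min s1 andbT; by rewrite lerDl s0.
Qed.
Lemma s_sub a c : s (a ⊕ c) <= s a + s c.
Proof.
rewrite sadd ge_min; apply/orP; left; rewrite lerD2l; apply: s_mono; exact: m_le_meetl.
Qed.
Lemma s_prec x y : x ≼ y -> s x <= s y.
Proof.
move=> h; apply: le_trans (s_mono (m_le_sub_add x y)) _.
by apply: le_trans (s_sub _ _) _; rewrite (svan h) addr0.
Qed.
Lemma s_disj a c : c ≼ ¬ a -> s (a ⊕ c) = s a + s c.
Proof.
move=> h; rewrite sadd.
have -> : s (mv_meet c (¬ a)) = s c.
  apply/eqP; rewrite eq_le; apply/andP; split; first by apply: s_mono; exact: m_le_meetl.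
  rewrite {1}(m_decomp c (¬ a)); apply: le_trans (s_sub _ _) _; by rewrite (svan h) addr0.
apply: min_l; rewrite -lerBrDl -sneg; exact: s_prec.
Qed.
Lemma s_nm_le k e : s (nm k e) <= k%:R * s e.
Proof.
elim: k => [|k IH] /=; first by rewrite mul0r svan //; exact: (I0 hmax).
apply: le_trans (s_sub _ _) _; by rewrite -natr1 mulrDl mul1r lerD2r.
Qed.

Section Fixe.
Variable e : M.
Hypothesis ne : ~ I e.
Local Notation b := (N e one).

Lemma disj_nm k : ~ one ≼ nm k.+1 e -> e ≼ ¬ nm k e.
Proof.
move=> h; case: (total hmax e (¬ nm k e)) => // h2; exfalso; apply: h.
rewrite /= -(m_addxN (nm k e)); exact: (prec_add hmax (prec_refl hmax _) h2).
Qed.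
Lemma s_nm k : (k < b)%N -> s (nm k e) = k%:R * s e.
Proof.
elim: k => [|k IH] hk /=; first by rewrite mul0r svan //; exact: (I0 hmax).
rewrite s_disj; last by apply: disj_nm; exact: sat.
rewrite IH; last exact: ltnW.
by rewrite -natr1 mulrDl mul1r.
Qed.
Lemma s_bound x : (2 <= b)%N -> `| b%:R * s x - (N e x)%:R | <= 2 :> R.
Proof.
move=> hb2.
set σ := s e; set n := N e x.
have hσ1 : 1 <= b%:R * σ.
  by have := le_trans (s_prec (Nspec hmax ne one)) (s_nm_le _ _); rewrite sone.
have hσ2 : (b.-1)%:R * σ <= 1.
  rewrite -s_nm; first exact: s1.
  by rewrite prednK ?ltnSn // ltnW.
have hb : (b.-1)%:R = b%:R - 1 :> R by rewrite -subn1 natrB // (ltnW hb2).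
rewrite hb in hσ2.
have hs1 : s x <= n%:R * σ by apply: le_trans (s_prec (Nspec hmax ne x)) (s_nm_le _ _).
have hnb : (n <= b)%N by exact: N_le_b.
have hnb' : n%:R <= b%:R :> R by rewrite ler_nat.
have hσ0 : 0 <= σ by exact: s0.
have hσ1' : σ <= 1 by exact: s1.
have hsx0 : 0 <= s x by exact: s0.
have hb0 : 2 <= b%:R :> R by rewrite (ler_nat R 2).
have hn0 : 0 <= n%:R :> R by [].
have p1 : b%:R * s x <= b%:R * (n%:R * σ) by apply: ler_wpM2l; lra.
have p2 : n%:R * (b%:R * σ) <= n%:R * (1 + σ) by apply: ler_wpM2l; lra.
have p3 : n%:R * σ <= b%:R * σ by apply: ler_wpM2r.
have p4 : 0 <= b%:R * s x by apply: mulr_ge0; lra.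
rewrite ler_norml; apply/andP; split; last by nra.
move: hnb' p1 p2 p3 p4; rewrite /n; case hn: (N e x) => [|n'] hnb' p1 p2 p3 p4.
  lra.
have hs2 : n'%:R * σ <= s x.
  rewrite -s_nm; last by move: (N_le_b hmax ne x); rewrite hn.
  apply: s_prec; apply: (Nlt hmax ne); by rewrite hn.
have p5 : b%:R * (n'%:R * σ) <= b%:R * s x by apply: ler_wpM2l; lra.
have p6 : n'%:R * 1 <= n'%:R * (b%:R * σ) by apply: ler_wpM2l.
rewrite -natr1; nra.
Qed.
Hypothesis atom : forall f, ~ I f -> e ≼ f.
Lemma s_atom x : b%:R * s x = (N e x)%:R.
Proof.
have hb0 := b_pos hmax ne.
have hbm : (b.-1 < b)%N by rewrite prednK.
have hdisj : e ≼ ¬ nm b.-1 e.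
  apply: atom => h; exact: (sat hmax ne hbm (iffRL (prec1 _ _) h)).
have hsb : s (nm b e) = b%:R * s e.
  rewrite -{1}(prednK hb0) /= s_disj // s_nm //.
  by rewrite -[in RHS](prednK hb0) -natr1 mulrDl mul1r.
have hsb1 : s (nm b e) = 1.
  apply/eqP; rewrite eq_le s1 /=; rewrite -sone; exact: s_prec (Nspec hmax ne one).
have hx : s x = s (nm (N e x) e).
  apply/eqP; rewrite eq_le; apply/andP; split; apply: s_prec;
    [exact: Nspec | exact: tight].
have := N_le_b hmax ne x; rewrite leq_eqVlt => /orP [/eqP hn | hn].
  by rewrite hx hn hsb1 mulr1.
by rewrite hx s_nm // mulrCA -hsb hsb1 mulr1.
Qed.
End Fixe.
End States.

Section AtomState.
Variable M : MVAlgebra.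
Variable R : realFieldType.
Local Notation "x ⊕ y" := (@mv_oplus M x y) (at level 50, left associativity).
Local Notation "¬ x" := (@mv_neg M x) (at level 35, right associativity).
Local Notation one := (mv_one M).
Implicit Types (x y z a b c d e f g u v w A B : M).
Variable I : M -> Prop.
Hypothesis hmax : mv_maximal_ideal I.
Local Notation "x ≼ y" := (prec I x y) (at level 70).
Local Notation N := (Nf I).
Variable e : M.
Hypothesis ne : ~ I e.
Hypothesis atom : forall f, ~ I f -> e ≼ f.
Local Notation b := (N e one).

Lemma N_add x z : N e (x ⊕ z) = minn (N e x + N e z) b.
Proof.
have h1 := A1 hmax ne x z; have h2 := N_le_b hmax ne (x ⊕ z).
case: (ltnP (N e (x ⊕ z)) b) => hk.
  have := E2 hmax ne atom hk; lia.
lia.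
Qed.
Lemma N_neg x : N e (¬ x) = (b - N e x)%N.
Proof. have := A3a hmax ne x; have := E3 hmax ne atom x; lia. Qed.

Definition hat (x : M) : R := (N e x)%:R / b%:R.
Lemma hat_state : is_state hat /\ forall x, I x -> hat x = 0.
Proof.
have hb0 : 0 < b%:R :> R by rewrite ltr0n; exact: b_pos.
have hle x : (N e x)%:R <= b%:R :> R by rewrite ler_nat; exact: N_le_b.
split; last by move=> x hx; rewrite /hat N_I // mul0r.
split.
- move=> a; rewrite /hat divr_ge0 //= ler_pdivrMr // mul1r; exact: hle.
- move=> a c; rewrite /hat m_add_meetN N_add -mulrDl.
  case: (leqP (N e a + N e (mv_meet c (¬ a))) b) => h.
    rewrite natrD; apply/esym/min_l.
    by rewrite ler_pdivrMr // mul1r -natrD ler_nat.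
  rewrite divff ?gt_eqF //; apply/esym/min_r.
  by rewrite ler_pdivlMr // mul1r -natrD ler_nat ltnW.
- move=> a; rewrite /hat N_neg natrB ?N_le_b // mulrBl divff ?gt_eqF //.
- by rewrite /hat divff ?gt_eqF.
Qed.
End AtomState.

Local Open Scope classical_set_scope.

Lemma ultra_conv (R : realType) (G : set_system nat) (GU : UltraFilter G) (u : nat -> R) :
  (forall k, 0 <= u k <= 1) -> exists l : R, u @ G --> l.
Proof.
move=> h01.
have FF : ProperFilter (u @ G) by exact: fmap_proper_filter.
have Fs : G (u @^-1` `[(0:R), 1]%classic).
  apply: filterS (@filterT _ G _) => k _ /=; rewrite in_itv /=; exact: h01.
have [l [_ cl]] := @segment_compact R 0 1 (u @ G) FF Fs.
exists l => A nA.
case: (in_ultra_setVsetC (u @^-1` A) GU) => // hc.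
have := cl (~` A) A hc nA; by case=> z [].
Qed.

Lemma ultra_ex : exists G : set_system nat, UltraFilter G /\ (\oo : set_system nat) `<=` G.
Proof. exact: ultraFilterLemma. Qed.


Lemma eq_eps (R : realFieldType) (D : R) : (forall eps, 0 < eps -> `|D| <= eps) -> D = 0.
Proof.
move=> h; apply/normr0_eq0/eqP; rewrite eq_le normr_ge0 andbT.
apply/ler_addgt0Pr => e he; rewrite add0r; exact: h.
Qed.
Lemma le_eps (R : realFieldType) (a c : R) : (forall eps, 0 < eps -> a <= c + eps) -> a <= c.
Proof. by move=> h; apply/ler_addgt0Pr. Qed.
Lemma min1_lip (R : realFieldType) (a c : R) : `|Num.min a 1 - Num.min c 1| <= `|a - c|.
Proof.
have y1 : a - c <= `|a - c| by exact: ler_norm.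
have y2 : c - a <= `|a - c| by rewrite distrC; exact: ler_norm.
rewrite ler_norml.
case: (lerP a 1) => ha; case: (lerP c 1) => hc;
  rewrite ?(min_l ha) ?(min_r (ltW ha)) ?(min_l hc) ?(min_r (ltW hc)); apply/andP; split; lra.
Qed.
Lemma real_min (R : realFieldType) (p b : nat) : (0 < b)%N ->
  (minn p b)%:R / b%:R = Num.min (p%:R / b%:R) 1 :> R.
Proof.
move=> hb; have hb0 : 0 < b%:R :> R by rewrite ltr0n.
case: (leqP p b) => h.
  apply/esym/min_l; by rewrite ler_pdivrMr // mul1r ler_nat.
rewrite divff ?gt_eqF //; apply/esym/min_r.
by rewrite ler_pdivlMr // mul1r ler_nat ltnW.
Qed.

Section Exist.
Variable M : MVAlgebra.
Variable R : realType.
Local Notation "x ⊕ y" := (@mv_oplus M x y) (at level 50, left associativity).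
Local Notation "¬ x" := (@mv_neg M x) (at level 35, right associativity).
Local Notation one := (mv_one M).
Implicit Types (x y z a b c d e f g u v w A B : M).
Variable I : M -> Prop.
Hypothesis hmax : mv_maximal_ideal I.
Local Notation "x ≼ y" := (prec I x y) (at level 70).
Local Notation N := (Nf I).

Definition happ e x : R := (N e x)%:R / (N e one)%:R.

Lemma approx e : ~ I e ->
 [/\ forall x, 0 <= happ e x <= 1, forall x, I x -> happ e x = 0, happ e one = 1,
     forall x y, `|happ e (x ⊕ y) - Num.min (happ e x + happ e (mv_meet y (¬ x))) 1|
        <= 2 / (N e one)%:R &
     forall x, `|happ e (¬ x) - (1 - happ e x)| <= 2 / (N e one)%:R].
Proof.
move=> ne; set b := N e one.
have hb : (0 < b)%N by exact: b_pos.
have hb0 : 0 < b%:R :> R by rewrite ltr0n.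
have hle x : (N e x)%:R <= b%:R :> R by rewrite ler_nat; exact: N_le_b.
split.
- move=> a; rewrite /happ divr_ge0 //= ler_pdivrMr // mul1r; exact: hle.
- by move=> x hx; rewrite /happ N_I // mul0r.
- by rewrite /happ divff ?gt_eqF.
- move=> x y; rewrite /happ m_add_meetN -mulrDl -natrD -real_min //.
  set z := mv_meet y (¬ x).
  have h1 := A1 hmax ne x z; have h2 := N_le_b hmax ne (x ⊕ z).
  have h3 : (N e (x ⊕ z) < b)%N -> (N e x + N e z <= N e (x ⊕ z) + 2)%N by exact: A2.
  have k1 : (N e (x ⊕ z) <= minn (N e x + N e z) b)%N by rewrite leq_min h1 h2.
  have k2 : (minn (N e x + N e z) b <= N e (x ⊕ z) + 2)%N.
    case: (ltnP (N e (x ⊕ z)) b) => hk; first by rewrite geq_min (h3 hk).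
    by rewrite geq_min; apply/orP; right; lia.
  rewrite -mulrBl normrM normfV normr_nat.
  apply: ler_wpM2r; first by rewrite invr_ge0 ler0n.
  move: k1 k2; set p := N e (x ⊕ z); set m := minn _ _ => k1 k2.
  have r1 : p%:R <= m%:R :> R by rewrite ler_nat.
  have r2 : m%:R <= p%:R + 2 :> R by rewrite -(natrD R p 2) ler_nat.
  rewrite ler_norml; apply/andP; split; lra.
- move=> x; have h1 := A3a hmax ne x; have h2 := A3b hmax ne x.
  have e1 : 1 - happ e x = (b%:R - (N e x)%:R) / b%:R by rewrite /happ mulrBl divff ?lt0r_neq0.
  rewrite e1 /happ -mulrBl normrM normfV normr_nat.
  apply: ler_wpM2r; first by rewrite invr_ge0 ler0n.
  have r1 : b%:R <= (N e x)%:R + (N e (¬ x))%:R :> R by rewrite -natrD ler_nat.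
  have r2 : (N e x)%:R + (N e (¬ x))%:R <= b%:R + 2 :> R by rewrite -natrD -(natrD R b 2) ler_nat.
  rewrite ler_norml; apply/andP; split; lra.
Qed.
End Exist.


Section Final.
Variable M : MVAlgebra.
Variable R : realType.
Local Notation "x ⊕ y" := (@mv_oplus M x y) (at level 50, left associativity).
Local Notation "¬ x" := (@mv_neg M x) (at level 35, right associativity).
Local Notation one := (mv_one M).
Implicit Types (x y z a b c d e f g u v w A B : M).
Variable I : M -> Prop.
Hypothesis hmax : mv_maximal_ideal I.
Local Notation "x ≼ y" := (prec I x y) (at level 70).
Local Notation N := (Nf I).

Lemma exists_state : exists h : M -> R, is_state h /\ forall x, I x -> h x = 0.
Proof.
case: (classic (exists a, ~ I a /\ forall f, ~ I f -> a ≼ f)) => [[a [na ha]]|noat].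
  by exists (hat R I a); exact: (hat_state R hmax na ha).
have hb := big_b hmax noat.
have [ek hek] := boolp.choice (fun k => hb k.+1).
have [G [GU sG]] := ultra_ex.
pose hk k x : R := happ R I (ek k) x.
have conv x : exists l : R, (fun k => hk k x) @ G --> l.
  by apply: ultra_conv => k; case: (approx R hmax (hek k).1) => h01 _ _ _ _; exact: h01.
have [h hh] := boolp.choice conv.
have close x (eps : R) : 0 < eps -> G [set k | `|h x - hk k x| < eps].
  by move=> he; exact: ((cvgrPdist_lt _ _).1 (hh x) eps he).
have ev (eps : R) : 0 < eps -> G [set k | 2 / (N (ek k) one)%:R < eps].
  move=> he; apply: sG.
  exists (Num.bound (2 / eps)) => // k /= hk'.
  have h1 := archi_boundP (ltW (divr_gt0 (ltr0n R 2) he)).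
  have h2 : (Num.bound (2 / eps))%:R <= k%:R :> R by rewrite ler_nat.
  have h3 : k%:R < (N (ek k) one)%:R :> R by rewrite ltr_nat; exact: (hek k).2.
  have hbp : 0 < (N (ek k) one)%:R :> R by apply: le_lt_trans h3; exact: ler0n.
  rewrite ltr_pdivrMr // mulrC -ltr_pdivrMr //.
  apply: lt_trans h1 _; exact: le_lt_trans h2 h3.
have pick x1 x2 x3 (eps : R) : 0 < eps -> exists k,
    [/\ `|h x1 - hk k x1| < eps, `|h x2 - hk k x2| < eps, `|h x3 - hk k x3| < eps
      & 2 / (N (ek k) one)%:R < eps].
  move=> he.
  case: (filter_ex (F := G) (filterI (filterI (close x1 eps he) (close x2 eps he)) (filterI (close x3 eps he) (ev eps he)))).
  by move=> k [[? ?] [? ?]]; exists k.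
exists h; split; last first.
  move=> x hx; apply: eq_eps => eps he; have [k [c1 _ _ _]] := pick x x x eps he.
  case: (approx R hmax (hek k).1) => _ hv _ _ _.
  by move: c1; rewrite /hk hv // subr0 => /ltW.
split.
- move=> x; apply/andP; split.
    apply: le_eps => eps he; have [k [c1 _ _ _]] := pick x x x eps he.
    case: (approx R hmax (hek k).1) => /(_ x) /andP [h0 h1] _ _ _ _.
    move: c1; rewrite ltr_norml /hk => /andP [c1 c2]; lra.
  rewrite -[1]addr0; apply: le_eps => eps he; have [k [c1 _ _ _]] := pick x x x eps he.
  case: (approx R hmax (hek k).1) => /(_ x) /andP [h0 h1] _ _ _ _.
  move: c1; rewrite ltr_norml /hk => /andP [c1 c2]; lra.
- move=> x y; set z := mv_meet y (¬ x).
  apply/eqP; rewrite -subr_eq0; apply/eqP; apply: eq_eps => eps he.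
  have he4 : 0 < eps / 4 by rewrite divr_gt0.
  have [k [c1 c2 c3 c4]] := pick (x ⊕ y) x z (eps / 4) he4.
  case: (approx R hmax (hek k).1) => _ _ _ /(_ x y) c5 _.
  rewrite -/z in c5.
  have c6 := min1_lip (happ R I (ek k) x + happ R I (ek k) z) (h x + h z).
  move: c1 c2 c3 c4 c5 c6; rewrite /hk.
  set m1 := Num.min _ 1; set m2 := Num.min _ 1.
  set A1 := happ R I (ek k) (x ⊕ y); set A2 := happ R I (ek k) x; set A3 := happ R I (ek k) z.
  set q := 2 / _ => c1 c2 c3 c4 c5 c6.
  have c7 : `|A2 + A3 - (h x + h z)| <= eps / 2.
    move: c2 c3; rewrite !ltr_norml => /andP [? ?] /andP [? ?].
    rewrite ler_norml; apply/andP; split; lra.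
  have c8 := le_trans c6 c7.
  move: c1 c5 c8; rewrite !ltr_norml !ler_norml.
  move=> /andP [? ?] /andP [? ?] /andP [? ?]; apply/andP; split; lra.
- move=> x; apply/eqP; rewrite -subr_eq0; apply/eqP; apply: eq_eps => eps he.
  have he4 : 0 < eps / 4 by rewrite divr_gt0.
  have [k [c1 c2 _ c4]] := pick (¬ x) x x (eps / 4) he4.
  case: (approx R hmax (hek k).1) => _ _ _ _ /(_ x) c5.
  move: c1 c2 c4 c5; rewrite /hk.
  set A1 := happ R I (ek k) (¬ x); set A2 := happ R I (ek k) x.
  set q := 2 / _ => c1 c2 c4 c5.
  move: c1 c2 c5; rewrite !ltr_norml !ler_norml.
  move=> /andP [? ?] /andP [? ?] /andP [? ?]; apply/andP; split; lra.
- apply/eqP; rewrite -subr_eq0; apply/eqP; apply: eq_eps => eps he.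
  have [k [c1 _ _ _]] := pick one one one eps he.
  case: (approx R hmax (hek k).1) => _ _ h1 _ _.
  by move: c1; rewrite /hk h1 => /ltW.
Qed.

Lemma uniq_state s1 s2 : is_state s1 -> (forall x, I x -> s1 x = 0) ->
  is_state s2 -> (forall x, I x -> s2 x = 0) -> forall x : M, s1 x = s2 x :> R.
Proof.
move=> hs1 hv1 hs2 hv2 x.
case: (classic (exists a, ~ I a /\ forall f, ~ I f -> a ≼ f)) => [[a [na ha]]|noat].
  have e1 := s_atom hmax hs1 hv1 na ha x; have e2 := s_atom hmax hs2 hv2 na ha x.
  have hb : (N a one)%:R != 0 :> R by rewrite pnatr_eq0 -lt0n; exact: b_pos.
  by apply: (mulfI hb); rewrite e1 e2.
apply/eqP; rewrite -subr_eq0; apply/eqP; apply: eq_eps => eps he.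
have [e [ne hK]] := big_b hmax noat (Num.bound (4 / eps)).+2.
have hb2 : (2 <= N e one)%N by apply: leq_trans hK; rewrite ltnS ltnS leq0n.
have b1 := s_bound hmax hs1 hv1 ne x hb2; have b2 := s_bound hmax hs2 hv2 ne x hb2.
set b := N e one in hK hb2 b1 b2.
have h1 := archi_boundP (ltW (divr_gt0 (ltr0n R 4) he)).
have h2 : (Num.bound (4 / eps))%:R <= b%:R :> R by rewrite ler_nat; apply: leq_trans hK; exact: leqW (leqnSn _).
have hbp : 0 < b%:R :> R by rewrite ltr0n; exact: leq_trans _ hb2.
have h3' : 4 / eps < b%:R := lt_le_trans h1 h2.
have h3 : 4 < b%:R * eps by rewrite -ltr_pdivrMr.
have h4 : b%:R * `|s1 x - s2 x| <= 4.
  rewrite -(ger0_norm (ltW hbp)) -normrM mulrBr.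
  move: b1 b2; rewrite !ler_norml => /andP [? ?] /andP [? ?]; apply/andP; split; lra.
rewrite -(ler_pM2l hbp); exact: le_trans h4 (ltW h3).
Qed.
End Final.


Lemma max_exists (M : MVAlgebra) : mv_zero M <> mv_one M -> mv_semisimple M ->
  exists I : M -> Prop, mv_maximal_ideal I.
Proof.
move=> h01 hss; apply: NNPP => hn; apply: h01; apply/esym; apply: hss => I hI.
by exfalso; apply: hn; exists I.
Qed.

Lemma state_of_prob (M : MVAlgebra) (R : realType) (Y : topologicalType)
  (p : M -> Y -> R) (y : Y) : prob_map p -> is_state (fun a => p a y).
Proof. by case=> _ h1 h2 h3 h4; split. Qed.


Local Close Scope ring_scope.
Theorem corollary3p13 (M : MVAlgebra) (R : realType) (Y : topologicalType) :
  mv_zero M <> mv_one M ->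
  mv_semisimple M ->
  hausdorff_space Y -> compact [set: Y] ->
  exists p : M -> Y -> R, extreme_prob_map p.
Proof.
move=> h01 hss _ _.
have [I hmax] := max_exists h01 hss.
have [h [hs hv]] := exists_state R hmax.
have hp : prob_map (fun a (_ : Y) => h a).
  case: hs => h1 h2 h3 h4; split => //.
  by move=> a; exact: cst_continuous.
exists (fun a _ => h a); split => // p1 p2 t hp1 hp2 /andP [t0 t1] hdec.
apply: boolp.funext => a; apply: boolp.funext => y.
have hs1 := state_of_prob y hp1; have hs2 := state_of_prob y hp2.
have van : forall x, I x -> p1 x y = 0%R /\ p2 x y = 0%R.
  move=> x hx; have := hdec x y; rewrite (hv x hx) => e.
  case: hs1 => /(_ x) /andP [a0 _] _ _ _; case: hs2 => /(_ x) /andP [b0 _] _ _ _.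
  have q1 : (0 <= t * p1 x y)%R by apply: mulr_ge0 => //; exact: ltW.
  have q2 : (0 <= (1 - t) * p2 x y)%R by apply: mulr_ge0 => //; rewrite subr_ge0 ltW.
  have r1 : (t * p1 x y = 0)%R by lra.
  have r2 : ((1 - t) * p2 x y = 0)%R by lra.
  move: r1 r2 => /eqP; rewrite mulf_eq0 (gt_eqF t0) /= => /eqP -> /eqP.
  by rewrite mulf_eq0 subr_eq0 (gt_eqF t1) /= => /eqP ->.
have e1 := uniq_state hmax hs1 (fun x hx => (van x hx).1) hs hv a.
have e2 := uniq_state hmax hs2 (fun x hx => (van x hx).2) hs hv a.
by rewrite /= e1 e2.
Qed.
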